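(* Let $\psi:(0,1]\to(0,\infty)$ with $\psi(1)=1$ and $\lim_{r\to0+}\psi(r)=0$, and let $f\in C^\psi(\mathbb{R}^d)$. (i) If $I_\psi\subset(1,2)$, then for every sufficiently small $\varepsilon>0$ there exists $C=C(d,\psi,\varepsilon)>0$ such that $\|Df\|_{C^0}\le C\|f\|_{C^0}+\varepsilon[Df]_{C^{-1;\psi}}$. (ii) If $I_\psi\subset(2,3)$, then for every sufficiently small $\varepsilon>0$ there exists $C=C(d,\psi,\varepsilon)>0$ such that $\|Df\|_{C^0}+\|D^2f\|_{C^0}\le C\|f\|_{C^0}+\varepsilon[D^2f]_{C^{-2;\psi}}$.
   Context: $g:(0,1]\to(0,\infty)$ is almost increasing if $c\,g(r)\le g(R)$ for some $c\in(0,1]$ and all $0<r\le R\le1$, almost decreasing if $g(R)\le Cg(r)$ for some $C\ge1$ and all $0<r\le R\le1$. $M_\psi=\inf\{\alpha: \psi(r)/r^\alpha\text{ almost decreasing}\}$, $m_\psi=\sup\{\alpha: \psi(r)/r^\alpha\text{ almost increasing}\}$, $I_\psi=[m_\psi,M_\psi]$. $\|f\|_{C^0}=\sup|f|$, $\|D^jf\|_{C^0}=\max_{|\gamma|=j}\|D^\gamma f\|_{C^0}$. For $j\in\mathbb{N}_0$, $[f]_{C^{-j;\psi}}=\sup_x\sup_{0<|h|\le1}\frac{|f(x+h)-f(x)|}{\psi(|h|)|h|^{-j}}$ and $[D^kf]_{C^{-k;\psi}}=\max_{|\gamma|=k}[D^\gamma f]_{C^{-k;\psi}}$. If $m_\psi\in(k,k+1]$,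 $k\in\mathbb{N}_0$, $C^\psi(\mathbb{R}^d)$ is the set of continuous $f$ with $D^\gamma f$ bounded continuous for $|\gamma|\le k$ and $[D^\gamma f]_{C^{-k;\psi}}<\infty$ for $|\gamma|=k$. *)

(* Defs.v *)
From HB Require Import structures.
From mathcomp Require Import all_boot all_order all_algebra.
From mathcomp Require Import all_classical all_reals all_analysis.
Set Implicit Arguments. Unset Strict Implicit. Unset Printing Implicit Defensive.
Import Order.TTheory GRing.Theory Num.Theory.
Import numFieldNormedType.Exports.
Local Open Scope classical_set_scope.
Local Open Scope ring_scope.

Section Defs.
Context {R : realType} {d : nat}.

Definition almost_incr (g : R -> R) : Prop :=
  exists c : R, 0 < c <= 1 /\
    forall r s : R, 0 < r -> r <= s -> s <= 1 -> c * g r <= g s.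
Definition almost_decr (g : R -> R) : Prop :=
  exists C : R, 1 <= C /\
    forall r s : R, 0 < r -> r <= s -> s <= 1 -> g s <= C * g r.

(* M_psi and m_psi as extended reals (inf of empty set = +oo, sup of empty = -oo) *)
Definition Mpsi (psi : R -> R) : \bar R :=
  ereal_inf [set (a%:E)%E | a in [set a : R | almost_decr (fun r => psi r / r `^ a)]].
Definition mpsi (psi : R -> R) : \bar R :=
  ereal_sup [set (a%:E)%E | a in [set a : R | almost_incr (fun r => psi r / r `^ a)]].

Definition enorm (h : 'rV[R]_d) : R := Num.sqrt (\sum_(i < d) h 0 i ^+ 2).

Definition evec (i : 'I_d) : 'rV[R]_d := delta_mx 0 i.
Definition pd (i : 'I_d) (f : 'rV[R]_d -> R) : 'rV[R]_d -> R :=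
  fun x => 'D_(evec i) f x.
(* D^gamma f, gamma given as a sequence of coordinate indices *)
Definition pds (s : seq 'I_d) (f : 'rV[R]_d -> R) : 'rV[R]_d -> R :=
  foldr pd f s.

Definition C0norm (g : 'rV[R]_d -> R) : \bar R :=
  ereal_sup [set (`|g x|%:E)%E | x in setT].
Definition DjC0norm (j : nat) (f : 'rV[R]_d -> R) : \bar R :=
  \big[maxe/-oo%E]_(s : j.-tuple 'I_d) C0norm (pds s f).

Definition semi (j : nat) (psi : R -> R) (g : 'rV[R]_d -> R) : \bar R :=
  ereal_sup [set ((`|g (xh.1 + xh.2) - g xh.1| /
                   (psi (enorm xh.2) * enorm xh.2 ^- j))%:E)%E
            | xh in [set xh : 'rV[R]_d * 'rV[R]_d | 0 < enorm xh.2 <= 1]].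
Definition Dksemi (k : nat) (psi : R -> R) (f : 'rV[R]_d -> R) : \bar R :=
  \big[maxe/-oo%E]_(s : k.-tuple 'I_d) semi k psi (pds s f).

Definition bounded_fun (g : 'rV[R]_d -> R) : Prop :=
  exists M : R, forall x, `|g x| <= M.

Definition Ck_psi (k : nat) (psi : R -> R) (f : 'rV[R]_d -> R) : Prop :=
  continuous f /\
  (forall s : seq 'I_d, (size s < k)%N ->
     forall (i : 'I_d) (x : 'rV[R]_d), derivable (pds s f) x (evec i)) /\
  (forall s : seq 'I_d, (size s <= k)%N ->
     continuous (pds s f) /\ bounded_fun (pds s f)) /\
  (forall s : seq 'I_d, size s = k -> (semi k psi (pds s f) < +oo)%E).

Definition Cpsi (psi : R -> R) (f : 'rV[R]_d -> R) : Prop :=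
  forall k : nat, ((k%:R)%:E < mpsi psi)%E -> (mpsi psi <= (k.+1%:R)%:E)%E ->
    Ck_psi k psi f.
End Defs.

(* Main.v *)
Require Import Defs.
From HB Require Import structures.
From mathcomp Require Import all_boot all_order all_algebra.
From mathcomp Require Import all_classical all_reals all_analysis.
From mathcomp Require Import ring lra.
Import Order.TTheory GRing.Theory Num.Theory.
Import numFieldNormedType.Exports.
Local Open Scope classical_set_scope.
Local Open Scope ring_scope.

Section H3.
Context {R : realType}.

Lemma powR_root (x p : R) : 0 < x -> 0 < p -> (x `^ p^-1) `^ p = x.
Proof.
move=> x0 p0; rewrite -powRrM mulVf ?gt_eqF//; exact: powRr1 (ltW x0).
Qed.

Lemma incr_le_decr (psi : R -> R) (a b : R) :
  almost_incr (fun r => psi r / r `^ a) ->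
  almost_decr (fun r => psi r / r `^ b) -> psi 1 = 1 ->
  (forall r, 0 < r -> r <= 1 -> 0 < psi r) -> a <= b.
Proof.
move=> [c [/andP [c0 c1] Hc]] [C [C1 HC]] p1 ppos.
rewrite leNgt; apply/negP => ba.
have C0 : 0 < C by apply: lt_le_trans C1.
have p0 : 0 < a - b by rewrite subr_gt0.
pose x := c / (2 * C).
have x0 : 0 < x by rewrite /x divr_gt0 // mulr_gt0.
have x1 : x <= 1.
  rewrite /x ler_pdivrMr ?mulr_gt0 // mul1r; lra.
pose r := x `^ (a - b)^-1.
have r0 : 0 < r by apply: powR_gt0.
have r1 : r <= 1.
  apply: (@le_trans _ _ (1 `^ (a - b)^-1)); last by rewrite powR1.
  apply: ge0_ler_powR => //; first by rewrite invr_ge0 ltW.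
    by rewrite nnegrE ltW.
  by rewrite nnegrE.
have rab : r `^ (a - b) = x by apply: powR_root.
have ra : r `^ a = r `^ b * x.
  rewrite -rab -powRD; first by rewrite addrC subrK.
  by apply/implyP => _; rewrite gt_eqF.
have rbpos : 0 < r `^ b by apply: powR_gt0.
have H1 := Hc r 1 r0 r1 (lexx _).
have H2 := HC r 1 r0 r1 (lexx _).
rewrite p1 powR1 divr1 in H1 H2.
move: H1; rewrite mulrA ler_pdivrMr ?powR_gt0 // mul1r ra => H1.
move: H2; rewrite mulrA ler_pdivlMr // mul1r => H2.
have : C * psi r * c <= C * (r `^ b * x).
  by rewrite -mulrA ler_pM2l // mulrC.
have : r `^ b * c <= C * psi r * c by rewrite ler_pM2r.
move=> A B; have := le_trans A B.
rewrite mulrCA ler_pM2l // => H.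
have Cx : C * x = c / 2.
  by rewrite /x; field; rewrite gt_eqF.
rewrite Cx in H; lra.
Qed.
Lemma small_psi (psi : R -> R) (k : nat) (a : R) :
  k%:R < a -> almost_incr (fun r => psi r / r `^ a) -> psi 1 = 1 ->
  (forall r, 0 < r -> r <= 1 -> 0 < psi r) ->
  forall delta : R, 0 < delta -> exists h : R, 0 < h /\ h <= 1 /\
    forall t, 0 < t -> t <= h -> psi t <= delta * t ^+ k.
Proof.
move=> ka [c [/andP [c0 c1] Hc]] p1 ppos delta dp.
have p0 : 0 < a - k%:R by rewrite subr_gt0.
pose x := Num.min (c * delta) 1.
have x0 : 0 < x by rewrite /x lt_min mulr_gt0 // ltr01.
have x1 : x <= 1 by rewrite /x ge_min lexx orbT.
exists (x `^ (a - k%:R)^-1); split; first exact: (powR_gt0 _ x0).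
have h1 : x `^ (a - k%:R)^-1 <= 1.
  apply: (@le_trans _ _ (1 `^ (a - k%:R)^-1)); last by rewrite powR1.
  apply: ge0_ler_powR => //; first by rewrite invr_ge0 ltW.
    by rewrite nnegrE ltW.
  by rewrite nnegrE.
split => // t t0 th.
have t1 : t <= 1 by apply: le_trans th h1.
have := Hc t 1 t0 t1 (lexx _).
rewrite p1 powR1 divr1 => H.
have ta : t `^ a = t ^+ k * t `^ (a - k%:R).
  rewrite -powR_mulrn ?ltW // -powRD; first by rewrite addrC subrK.
  by apply/implyP => _; rewrite gt_eqF.
have tpos : 0 < t `^ a by apply: powR_gt0.
have Hp : psi t <= t `^ a / c.
  by move: H; rewrite mulrA ler_pdivrMr // mul1r ler_pdivlMr // mulrC.
apply: (le_trans Hp); rewrite ta.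
have : t `^ (a - k%:R) <= x.
  rewrite -[X in _ <= X](@powR_root x (a - k%:R) x0 p0).
  apply: ge0_ler_powR => //; first exact: ltW.
    by rewrite nnegrE ltW.
  by rewrite nnegrE powR_ge0.
move=> tx.
rewrite -mulrA mulrC ler_pM2r ?exprn_gt0 //.
rewrite ler_pdivrMr // (le_trans tx) // mulrC ge_min lexx //.
Qed.

Lemma mpsi_gt (psi : R -> R) (x : R) : (x%:E < mpsi psi)%E ->
  exists a, x < a /\ almost_incr (fun r => psi r / r `^ a).
Proof. by case/ereal_sup_gt => _ [a Ha <-]; rewrite lte_fin => xa; exists a. Qed.

Lemma mpsi_le (psi : R -> R) (x : R) : psi 1 = 1 ->
  (forall r, 0 < r -> r <= 1 -> 0 < psi r) ->
  (Mpsi psi < x%:E)%E -> (mpsi psi <= x%:E)%E.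
Proof.
move=> p1 pp; case/ereal_inf_lt => _ [b Hb <-]; rewrite lte_fin => bx.
apply: ge_ereal_sup => _ [a Ha <-]; rewrite lee_fin.
apply: le_trans (ltW bx); exact: incr_le_decr Ha Hb p1 pp.
Qed.
End H3.

Section H.
Context {R : realType} {d : nat}.
Implicit Types (g f : 'rV[R]_d -> R) (psi : R -> R).

Lemma enorm_evec (i : 'I_d) (t : R) : enorm (t *: evec i) = `|t|.
Proof.
rewrite /enorm (bigD1 i) //= big1 ?addr0.
  by rewrite /evec !mxE !eqxx mulr1 sqrtr_sqr.
by move=> j ji; rewrite /evec !mxE (negbTE ji) andbF mulr0 expr0n.
Qed.

Lemma C0_ub g x : (`|g x|%:E <= C0norm g)%E.
Proof. by apply: ereal_sup_ubound; exists x. Qed.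

Lemma C0fin g : Defs.bounded_fun g ->
  exists M, C0norm g = M%:E /\ 0 <= M /\ forall y, `|g y| <= M.
Proof.
move=> [M HM].
have lo := C0_ub g 0.
have hi : (C0norm g <= M%:E)%E.
  by apply: ge_ereal_sup => _ [y _ <-]; rewrite lee_fin; exact: HM.
have fin : C0norm g \is a fin_num.
  rewrite fin_numE; apply/andP; split.
    by apply/negP => /eqP E; rewrite E in lo.
  by apply/negP => /eqP E; rewrite E in hi.
exists (fine (C0norm g)); split; first by rewrite fineK.
split.
  by rewrite -lee_fin fineK //; apply: le_trans lo; rewrite lee_fin.
by move=> y; rewrite -lee_fin fineK // C0_ub.
Qed.

Lemma DjC0fin (n : nat) (i0 : 'I_d) f :
  (forall s : n.-tuple 'I_d, Defs.bounded_fun (pds s f)) ->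
  exists A, DjC0norm n f = A%:E /\
    (forall (s : n.-tuple 'I_d) x, `|pds s f x| <= A) /\
    (forall b, (forall (s : n.-tuple 'I_d) x, `|pds s f x| <= b) -> A <= b).
Proof.
move=> bd.
have hi : (DjC0norm n f < +oo)%E.
  rewrite /DjC0norm; apply: (big_ind (fun x => x < +oo)%E) => //.
    by move=> x y xo yo; rewrite /maxe; case: ifP.
  move=> s _; have [M [-> _]] := C0fin _ (bd s); exact: ltry.
have lo : (`|pds (nseq_tuple n i0) f 0|%:E <= DjC0norm n f)%E.
  apply: le_trans (C0_ub _ 0) _; exact: le_bigmax.
have fin : DjC0norm n f \is a fin_num.
  rewrite fin_numE; apply/andP; split.
    by apply/negP => /eqP E; rewrite E in lo.
  by rewrite -ltey.
exists (fine (DjC0norm n f)); split; first by rewrite fineK.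
split.
  move=> s x; rewrite -lee_fin fineK //.
  apply: le_trans (C0_ub _ x) _; exact: le_bigmax.
move=> b Hb; rewrite -lee_fin fineK //.
apply: bigmax_le => //; first exact: leNye.
move=> s _; apply: ge_ereal_sup => _ [y _ <-]; rewrite lee_fin; exact: Hb.
Qed.

Lemma semi_ub k psi g x (h : 'rV[R]_d) : 0 < enorm h <= 1 ->
  ((`|g (x + h) - g x| / (psi (enorm h) * enorm h ^- k))%:E <= semi k psi g)%E.
Proof. by move=> hh; apply: ereal_sup_ubound; exists (x, h). Qed.

Lemma Dksemi_cases (k : nat) (i0 : 'I_d) psi f : psi 1 = 1 ->
  Dksemi k psi f = +oo%E \/
  exists S, Dksemi k psi f = S%:E /\ 0 <= S /\
    forall (s : k.-tuple 'I_d), (semi k psi (pds s f) <= S%:E)%E.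
Proof.
move=> p1.
have [->|ny] := eqVneq (Dksemi k psi f) +oo%E; first by left.
right.
have lo : (0%:E <= Dksemi k psi f)%E.
  apply: le_trans _ (le_bigmax _ _ (nseq_tuple k i0)).
  apply: le_trans (semi_ub k psi _ 0 (1 *: evec i0) _).
    by rewrite enorm_evec normr1 p1 expr1n invr1 mulr1 divr1 lee_fin.
  by rewrite enorm_evec normr1 ltr01 lexx.
have fin : Dksemi k psi f \is a fin_num.
  by rewrite fin_numE ny andbT; apply/negP => /eqP E; rewrite E in lo.
exists (fine (Dksemi k psi f)); split; first by rewrite fineK.
split; first by rewrite -lee_fin fineK.
by move=> s; rewrite fineK //; exact: le_bigmax.
Qed.
Lemma shift_quot (F : 'rV[R]_d -> R) (x e : 'rV[R]_d) (t : R) :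
  (fun h : R => h^-1 *: (((fun s => F (x + s *: e)) \o shift t) (h *: 1)
        - (fun s => F (x + s *: e)) t)) =
  (fun h : R => h^-1 *: ((F \o shift (x + t *: e)) (h *: e) - F (x + t *: e))).
Proof.
apply/funext => h /=; congr (_ *: (F _ - _)).
rewrite /shift /= [h%:A]mulr1 scalerDl addrC -addrA (addrC (t *: e)); reflexivity.
Qed.

Lemma MV (F : 'rV[R]_d -> R) (i : 'I_d) (x : 'rV[R]_d) (h : R) :
  0 < h -> (forall y, derivable F y (evec i)) ->
  exists2 t, 0 < t < h &
    F (x + h *: evec i) - F x = h * pd i F (x + t *: evec i).
Proof.
move=> h0 dF.
pose g := fun s : R => F (x + s *: evec i).
have dg : forall t : R, is_derive t (1:R) g (pd i F (x + t *: evec i)).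
  move=> t; split.
    by rewrite /derivable /g shift_quot; exact: dF.
  by rewrite /derive /g shift_quot.
have gc : {within `[0, h], continuous g}.
  apply: derivable_within_continuous => t _.
  by case: (dg t).
have [t tin ht] := @MVT R g (fun t => pd i F (x + t *: evec i)) 0 h h0
  (fun t _ => dg t) gc.
exists t; first by move: tin; rewrite in_itv.
by move: ht; rewrite /g scale0r addr0 subr0 mulrC.
Qed.

Lemma first_order g (i : 'I_d) (Mg h : R) x : 0 < h ->
  (forall y, `|g y| <= Mg) -> (forall y, derivable g y (evec i)) ->
  exists t, 0 < t < h /\
    `|pd i g x| <= 2 * Mg / h + `|pd i g (x + t *: evec i) - pd i g x|.
Proof.
move=> h0 bg dg.
have [t th E] := MV g i x h h0 dg.
exists t; split => //.
set G := pd i g.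
have H1 : `|G (x + t *: evec i)| <= 2 * Mg / h.
  rewrite ler_pdivlMr // mulrC -(ger0_norm (ltW h0)) -normrM -E.
  apply: (le_trans (ler_normB _ _)).
  have := bg (x + h *: evec i); have := bg x; lra.
apply: le_trans (lerD H1 (lexx _)).
have E2 : G (x + t *: evec i) - (G (x + t *: evec i) - G x) = G x by ring.
rewrite -{1}E2; exact: ler_normB.
Qed.

Lemma semi_step (k : nat) psi g (S : R) x (i : 'I_d) (t delta : R) :
  (semi k psi g <= S%:E)%E -> 0 < t -> t <= 1 -> 0 < psi t ->
  psi t <= delta * t ^+ k -> 0 <= S ->
  `|g (x + t *: evec i) - g x| <= S * delta.
Proof.
move=> Hs t0 t1 pt pk S0.
have hn : 0 < enorm (t *: evec i) <= 1 by rewrite enorm_evec gtr0_norm // t0.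
have := le_trans (semi_ub k psi g x (t *: evec i) hn) Hs.
rewrite !enorm_evec !(gtr0_norm t0) => H; have {H} : (`|g (x + t *: evec i) - g x| / (psi t / t ^+ k) <= S)%R by exact: H.
have tk : 0 < t ^+ k by rewrite exprn_gt0.
rewrite ler_pdivrMr; last by rewrite mulr_gt0 // invr_gt0.
move=> H; apply: (le_trans H); apply: ler_wpM2l => //.
by rewrite ler_pdivrMr.
Qed.
End H.

Lemma arith2 {R : realType} (h F A B S e : R) : 0 < h -> h <= 1 -> 0 <= F -> 0 <= S -> 0 < e ->
  B <= 2 * A / h + S * (e / 3) -> A <= 2 * F / (h / 4) + h / 4 * B ->
  A + B <= (16 / h + 32 / (h * h)) * F + e * S.
Proof.
move=> h0 h1 F0 S0 e0 HB HA.
pose u := h^-1. pose v := u * u. pose X := S * (e / 3).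
have hn : h != 0 by rewrite gt_eqF.
have u0 : 0 <= u by rewrite invr_ge0 ltW.
have X0 : 0 <= X by rewrite mulr_ge0 // divr_ge0 // ltW.
have hu : h * u = 1 by rewrite mulfV.
have E1 : 2 * A / h = 2 * (u * A) by rewrite /u; field.
have HB' : B <= 2 * (u * A) + X by rewrite -E1.
have E2 : 2 * F / (h / 4) = 8 * (u * F) by rewrite /u; field.
have HA' : A <= 8 * (u * F) + h / 4 * B by rewrite -E2.
have P1 : u * A <= 8 * (v * F) + B / 4.
  have := ler_wpM2l u0 HA'.
  have -> : u * (8 * (u * F) + h / 4 * B) = 8 * (v * F) + (h * u) / 4 * B by rewrite /v; ring.
  rewrite hu; lra.
have P2 : B <= 32 * (v * F) + 2 * X by lra.
have P3 : h * B <= 32 * (u * F) + 2 * (h * X).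
  have := ler_wpM2l (ltW h0) P2.
  have -> : h * (32 * (v * F) + 2 * X) = 32 * ((h * u) * (u * F)) + 2 * (h * X) by rewrite /v; ring.
  rewrite hu; lra.
have P4 : h * X <= X by rewrite ler_piMl.
have -> : (16 / h + 32 / (h * h)) * F + e * S = 16 * (u * F) + 32 * (v * F) + 3 * X.
  by rewrite /v /u /X; field.
have HA'' : A <= 8 * (u * F) + (h * B) / 4.
  lra.
lra.
Qed.

Theorem lemma2p3 (R : realType) (d : nat) (psi : R -> R)
  (psi_pos : forall r : R, 0 < r -> r <= 1 -> 0 < psi r)
  (psi1 : psi 1 = 1)
  (psi0 : psi r @[r --> 0^'+] --> 0) :
  (((1%:E < mpsi psi)%E /\ (Mpsi psi < 2%:E)%E) ->
    exists eps0 : R, 0 < eps0 /\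
      forall eps : R, 0 < eps -> eps < eps0 ->
      exists C : R, 0 < C /\
        forall f : 'rV[R]_d -> R, Cpsi psi f ->
          (DjC0norm 1 f <= C%:E * C0norm f + eps%:E * Dksemi 1 psi f)%E) /\
  (((2%:E < mpsi psi)%E /\ (Mpsi psi < 3%:E)%E) ->
    exists eps0 : R, 0 < eps0 /\
      forall eps : R, 0 < eps -> eps < eps0 ->
      exists C : R, 0 < C /\
        forall f : 'rV[R]_d -> R, Cpsi psi f ->
          (DjC0norm 1 f + DjC0norm 2 f <= C%:E * C0norm f + eps%:E * Dksemi 2 psi f)%E).
Proof.
split.
- move=> [m1 M2].
  have [a [a1 Ha]] := mpsi_gt _ _ m1.
  have mle := mpsi_le _ _ psi1 psi_pos M2.
  exists 1; split => // eps eps0 _.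
  have ka : (1%:R : R) < a by rewrite mulr1n.
  have [h [h0 [h1 Hh]]] := @small_psi R psi 1 a ka Ha psi1 psi_pos eps eps0.
  exists (2 / h); split; first by rewrite divr_gt0.
  move=> f Hf.
  have m1' : (((1%N)%:R : R)%:E < mpsi psi)%E by rewrite mulr1n.
  have [fc [fd [fb fs]]] := Hf 1%N m1' mle.
  apply: bigmax_le; first exact: leNye.
  case=> [[|i [|j l]] //= _] _.
  apply: ge_ereal_sup => _ [x _ <-].
  have [F [-> [F0 HF]]] := C0fin f (fb [::] isT).2.
  case: (Dksemi_cases 1 i psi f psi1) => [->|[S [-> [S0 HS]]]].
    by rewrite [(eps%:E * _)%E]muleC gt0_mulye ?lte_fin // -EFinM addey // leey.
  rewrite -EFinM -EFinM -EFinD lee_fin.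
  have [t [/andP [t0 th] Ht]] := first_order f i F h x h0 HF (fun y => fd [::] isT i y).
  apply: (le_trans Ht).
  have t1 : t <= 1 by apply: le_trans (ltW th) h1.
  have H := @semi_step R d 1 psi (pd i f) S x i t eps (HS [tuple i]) t0 t1 (psi_pos t t0 t1) (Hh t t0 (ltW th)) S0.
  have E : 2 * F / h = 2 / h * F by rewrite mulrAC.
  rewrite E [eps * S]mulrC; exact: lerD (lexx _) H.
- move=> [m2 M3].
  have [a [a2 Ha]] := mpsi_gt _ _ m2.
  have mle := mpsi_le _ _ psi1 psi_pos M3.
  exists 1; split => // eps eps0 _.
  have ka : (2%:R : R) < a by [].
  have e3 : 0 < eps / 3 by rewrite divr_gt0.
  have [h [h0 [h1 Hh]]] := @small_psi R psi 2 a ka Ha psi1 psi_pos (eps / 3) e3.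
  exists (16 / h + 32 / (h * h)); split; first by rewrite addr_gt0 // divr_gt0 // mulr_gt0.
  move=> f Hf.
  have m2' : (((2%N)%:R : R)%:E < mpsi psi)%E by [].
  have [fc [fd [fb fs]]] := Hf 2%N m2' mle.
  have [d0|dpos] := posnP d.
    subst d.
    have L : forall n, (DjC0norm n.+1 f <= -oo)%E.
      move=> n; apply: bigmax_le => // s _.
      by case: (thead s).
    by apply: le_trans (leeD (L 0%N) (L 1%N)) _; rewrite leNye.
  pose i0 := Ordinal dpos.
  have [F [EF [F0 HF]]] := C0fin f (fb [::] isT).2.
  have bd1 : forall s : 1.-tuple 'I_d, Defs.bounded_fun (pds s f).
    by move=> s; apply: (fb s _).2; rewrite size_tuple.
  have bd2 : forall s : 2.-tuple 'I_d, Defs.bounded_fun (pds s f).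
    by move=> s; apply: (fb s _).2; rewrite size_tuple.
  have [A [EA [HA1 HA2]]] := DjC0fin 1 i0 f bd1.
  have [B [EB [HB1 HB2]]] := DjC0fin 2 i0 f bd2.
  rewrite EF EA EB.
  case: (Dksemi_cases 2 i0 psi f psi1) => [->|[S [-> [S0 HS]]]].
    by rewrite [(eps%:E * _)%E]muleC gt0_mulye ?lte_fin // -EFinM addey // leey.
  rewrite -!EFinM -!EFinD lee_fin.
  have HA1' : forall j x, `|pd j f x| <= A := fun j x => HA1 [tuple j] x.
  have HB1' : forall i j x, `|pd i (pd j f) x| <= B := fun i j x => HB1 [tuple i; j] x.
  have HB : B <= 2 * A / h + S * (eps / 3).
    apply: HB2; case=> [[|i [|j [|l m]]] //= _] x.
    have [t [/andP [t0 th] Ht]] := first_order (pd j f) i A h x h0 (HA1' j)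
      (fun y => fd [:: j] isT i y).
    apply: (le_trans Ht); apply: lerD => //.
    have t1 : t <= 1 by apply: le_trans (ltW th) h1.
    exact: (@semi_step R d 2 psi (pd i (pd j f)) S x i t (eps / 3) (HS [tuple i; j])
      t0 t1 (psi_pos t t0 t1) (Hh t t0 (ltW th)) S0).
  have HA : A <= 2 * F / (h / 4) + h / 4 * B.
    apply: HA2; case=> [[|j [|l m]] //= _] x.
    have h4 : 0 < h / 4 by rewrite divr_gt0.
    have [t [/andP [t0 th] Ht]] := first_order f j F (h / 4) x h4 HF
      (fun y => fd [::] isT j y).
    apply: (le_trans Ht); apply: lerD => //.
    have [t' _ E] := MV (pd j f) j x t t0 (fun y => fd [:: j] isT j y).
    rewrite E normrM (gtr0_norm t0).
    apply: ler_pM => //; first exact: ltW.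
    exact: ltW.
  exact: arith2 h0 h1 F0 S0 eps0 HB HA.
Qed.
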